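(* Let $\mathcal O\subset\mathbb R^n$ be open and $g:\mathbb R^n\to\mathbb R$ positive. Let $w$ be a solution and $z$ a strict subsolution to the free boundary problem associated with $g$ in $\mathcal O$ (as defined in the context), with $w,z\in C(\overline{\mathcal O})$. If $w\ge z$ in $\overline{\mathcal O}$, then $w>z$ in $\mathcal O$. The analogous statement holds for strict supersolutions (with the inequalities reversed).
   Context: For a function $f$, $f^+:=|f|\chi_{\{f>0\}}$ and $f^-:=|f|\chi_{\{f<0\}}$. A solution to the free boundary problem associated to $g$ in $\mathcal O$ is a continuous $w$ with $w\in C^2(\{w>0\})\cap C^2(\{w<0\})$, $w\in C^1(\overline{\{w>0\}})\cap C^1(\overline{\{w<0\}})$, $\Delta w=0$ on $\{w\ne0\}\cap\mathcal O$, and $g(x)(w^+)_{\nu_x}(x)=-(w^-)_{\nu_x}(x)$ for $x\in\{w=0\}\cap\mathcal O$, where $\nu_x$ is the unit normal to $\{w=0\}$ at $x$ pointing into $\{w>0\}$. A strict subsolution to the free boundary problem associated with $g$ in $\mathcal O$ is $z\in C(\overline{\mathcal O})$ such that: $\{z=0\}$ is locally the graph of a $C^2$ function; $z\in C^1(\overline{\{z>0\}\cap\mathcal O})\cap C^1(\overline{\{z<0\}\cap\mathcal O})$; $\Delta z>0$ on $\{z\neq0\}$; and for $x_0\in\{z=0\}$, $g(x_0)(z^+)_{\nu_{x_0}}(x_0)+(z^-)_{\nu_{x_0}}(x_0)>0$, where $\nu_{x_0}$ is the inward unit normal at $x_0$ to $\{z>0\}$. A strict supersolution is defined analogously with the inequalities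 reversed ($\Delta z<0$ and the boundary quantity $<0$). *)

(* Defs.v *)
From HB Require Import structures.
From mathcomp Require Import all_boot all_order all_algebra.
From mathcomp Require Import all_classical all_reals all_analysis.
Set Implicit Arguments. Unset Strict Implicit. Unset Printing Implicit Defensive.
Import Order.TTheory GRing.Theory Num.Theory.
Import numFieldNormedType.Exports.
Local Open Scope classical_set_scope.
Local Open Scope ring_scope.

Section FreeBoundary.
Context {R : realType} {n : nat}.
Local Notation V := 'rV[R]_n.

Definition evec (i : 'I_n) : V := delta_mx 0 i.

(* Euclidean inner product (the normed structure on 'rV is the max norm,
   so unit vectors are expressed through the Euclidean inner product) *)
Definition dotv (u v : V) : R := \sum_(i < n) u 0 i * v 0 i.

Definition grad (f : V -> R) (x : V) : V := \row_i 'D_(evec i) f x.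

Definition fpos (f : V -> R) (x : V) : R := if 0 < f x then `|f x| else 0.
Definition fneg (f : V -> R) (x : V) : R := if f x < 0 then `|f x| else 0.

Definition posph (O : set V) (f : V -> R) : set V := O `&` [set x | 0 < f x].
Definition negph (O : set V) (f : V -> R) : set V := O `&` [set x | f x < 0].

Definition C1_on (f : V -> R) (A : set V) : Prop :=
  forall x, A x -> differentiable f x /\
    forall i, 'D_(evec i) f y @[y --> x] --> 'D_(evec i) f x.

Definition C2_on (f : V -> R) (A : set V) : Prop :=
  C1_on f A /\ forall i, C1_on ('D_(evec i) f) A.

Definition C1_closure (f : V -> R) (A : set V) (G : V -> V) : Prop :=
  C1_on f A /\ {within closure A, continuous f} /\
  {within closure A, continuous G} /\ (forall x, A x -> G x = grad f x).

Definition has_lap (f : V -> R) (x : V) : Prop :=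
  forall i, (\forall y \near x, derivable f y (evec i)) /\
            derivable ('D_(evec i) f) x (evec i).

Definition lap (f : V -> R) (x : V) : R :=
  \sum_(i < n) 'D_(evec i) ('D_(evec i) f) x.

(* nu is a unit normal at x to the hypersurface S (locally the zero set of a
   C^1 function psi with non-vanishing gradient parallel to nu) and it points
   into A: x + t nu lies in A for all small t > 0 *)
Definition normal_into (S A : set V) (x nu : V) : Prop :=
  dotv nu nu = 1 /\
  (exists (psi : V -> R) (U : set V), open U /\ U x /\ C1_on psi U /\
     (forall y, U y -> (S y <-> psi y = 0)) /\
     exists c : R, 0 < c /\ grad psi x = c *: nu) /\
  \forall t \near 0^'+, A (x + t *: nu).

Definition locally_C2_graph (S : set V) (x0 : V) : Prop :=
  exists e : V, dotv e e = 1 /\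
  exists phi : V -> R, C2_on phi setT /\
    \forall x \near x0, (S x <-> dotv x e = phi (x - dotv x e *: e)).

(* normal derivative (f^{+/-})_nu (x) of the function f^{+/-} whose gradient on the
   phase A extends continuously to G on closure A; outside closure A the function
   f^{+/-} vanishes identically near x, so its derivative is 0 *)
Definition nder (A : set V) (G : V -> V) (x nu : V) : R :=
  if `[< closure A x >] then dotv (G x) nu else 0.

Definition is_solution (g : V -> R) (O : set V) (w : V -> R) : Prop :=
  {within closure O, continuous w} /\
  C2_on w (posph O w) /\ C2_on w (negph O w) /\
  (forall x, O x -> w x != 0 -> lap w x = 0) /\
  exists Gp Gm : V -> V,
    C1_closure (fpos w) (posph O w) Gp /\ C1_closure (fneg w) (negph O w) Gm /\
    forall x, O x -> w x = 0 ->
      exists nu, normal_into [set y | w y = 0] [set y | 0 < w y] x nu /\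
        g x * nder (posph O w) Gp x nu = - nder (negph O w) Gm x nu.

Definition is_strict_subsolution (g : V -> R) (O : set V) (z : V -> R) : Prop :=
  {within closure O, continuous z} /\
  (forall x0, O x0 -> z x0 = 0 -> locally_C2_graph [set y | z y = 0] x0) /\
  (forall x, O x -> z x != 0 -> has_lap z x /\ 0 < lap z x) /\
  exists Gp Gm : V -> V,
    C1_closure (fpos z) (posph O z) Gp /\ C1_closure (fneg z) (negph O z) Gm /\
    forall x0, O x0 -> z x0 = 0 ->
      exists nu, normal_into [set y | z y = 0] [set y | 0 < z y] x0 nu /\
        0 < g x0 * nder (posph O z) Gp x0 nu + nder (negph O z) Gm x0 nu.

Definition is_strict_supersolution (g : V -> R) (O : set V) (z : V -> R) : Prop :=
  {within closure O, continuous z} /\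
  (forall x0, O x0 -> z x0 = 0 -> locally_C2_graph [set y | z y = 0] x0) /\
  (forall x, O x -> z x != 0 -> has_lap z x /\ lap z x < 0) /\
  exists Gp Gm : V -> V,
    C1_closure (fpos z) (posph O z) Gp /\ C1_closure (fneg z) (negph O z) Gm /\
    forall x0, O x0 -> z x0 = 0 ->
      exists nu, normal_into [set y | z y = 0] [set y | 0 < z y] x0 nu /\
        g x0 * nder (posph O z) Gp x0 nu + nder (negph O z) Gm x0 nu < 0.

End FreeBoundary.

(* Main.v *)
Require Import Defs.
From HB Require Import structures.
From mathcomp Require Import all_boot all_order all_algebra.
From mathcomp Require Import all_classical all_reals all_analysis.
From mathcomp Require Import ring lra.
Import Order.TTheory GRing.Theory Num.Theory.
Import numFieldNormedType.Exports.
Local Open Scope classical_set_scope.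
Local Open Scope ring_scope.
Set Implicit Arguments. Unset Strict Implicit. Unset Printing Implicit Defensive.


Section Helpers.
Context {R : realType} {n : nat}.
Local Notation V := 'rV[R]_n.

Lemma dotvC (u v : V) : dotv u v = dotv v u.
Proof. by rewrite /dotv; apply: eq_bigr => i _; rewrite mulrC. Qed.

Lemma dotvDl (u v w : V) : dotv (u + v) w = dotv u w + dotv v w.
Proof. by rewrite /dotv -big_split; apply: eq_bigr => i _; rewrite mxE mulrDl. Qed.

Lemma dotvZl (a : R) (u w : V) : dotv (a *: u) w = a * dotv u w.
Proof. by rewrite /dotv mulr_sumr; apply: eq_bigr => i _; rewrite mxE mulrA. Qed.

Lemma dotvNl (u w : V) : dotv (- u) w = - dotv u w.
Proof. by rewrite -scaleN1r dotvZl mulN1r. Qed.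

Lemma dotvDr (u v w : V) : dotv w (u + v) = dotv w u + dotv w v.
Proof. by rewrite dotvC dotvDl !(dotvC w). Qed.

Lemma dotvZr (a : R) (u w : V) : dotv w (a *: u) = a * dotv w u.
Proof. by rewrite dotvC dotvZl dotvC. Qed.

Lemma dotvNr (u w : V) : dotv w (- u) = - dotv w u.
Proof. by rewrite dotvC dotvNl dotvC. Qed.

Lemma dotvBl (u v w : V) : dotv (u - v) w = dotv u w - dotv v w.
Proof. by rewrite dotvDl dotvNl. Qed.

Lemma dotvBr (u v w : V) : dotv w (u - v) = dotv w u - dotv w v.
Proof. by rewrite dotvDr dotvNr. Qed.

Lemma dotv_ge0 (u : V) : 0 <= dotv u u.
Proof. by rewrite /dotv; apply: sumr_ge0 => i _; rewrite -expr2 sqr_ge0. Qed.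

Lemma dotv_unit_le1 (u v : V) : dotv u u = 1 -> dotv v v = 1 -> dotv u v <= 1.
Proof.
move=> hu hv; have := dotv_ge0 (u - v).
rewrite dotvBl !dotvBr hu hv (dotvC v u) => h.
have : 0 <= 2 - 2 * dotv u v by move: h; rewrite -!addrA; lra.
lra.
Qed.

Lemma grad_dir (f : V -> R) x v : differentiable f x ->
  'D_v f x = dotv (grad f x) v.
Proof.
move=> df; rewrite deriveE // {1}(row_sum_delta v) linear_sum /dotv.
apply: eq_bigr => i _; rewrite linearZ /= mxE -deriveE // mulrC.
by [].

Qed.

Lemma line_is_derive (F : V -> R) (y v : V) (t : R) :
  derivable F (y + t *: v) v ->
  is_derive t 1 (fun s => F (y + s *: v)) ('D_v F (y + t *: v)).
Proof.
move=> d.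
have E : (fun h : R => h^-1 *: (((fun s => F (y + s *: v)) \o shift t) (h *: 1)
            - F (y + t *: v))) =
         (fun h => h^-1 *: ((F \o shift (y + t *: v)) (h *: v) - F (y + t *: v))).
  apply: funext => h /=; congr (_ *: (F _ - _)).
  rewrite -[h%:A]/(h * 1) mulr1 scalerDl.
  by rewrite addrCA.
split; first by rewrite /derivable E.
by rewrite /derive E.
Qed.


Lemma near_eps (P : V -> Prop) (x : V) : (\forall y \near x, P y) ->
  exists2 d, 0 < d & forall y, `|x - y| < d -> P y.
Proof.
move=> /nbhs_ballP [d d0 hd]; exists d => // y xy; apply: hd.
by rewrite -ball_normE /ball_ /=.
Qed.

Lemma within_cvg_eps (A : set V) (h : V -> R) (x : V) (l : R) :
  h @ within A (nbhs x) --> l -> forall e, 0 < e ->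
  exists2 d, 0 < d & forall y, A y -> `|x - y| < d -> `|l - h y| < e.
Proof.
move=> /cvgrPdist_lt hc e e0; have := hc e e0.
rewrite /within /= => /near_eps [d d0 hd]; exists d => // y Ay xy.
exact: hd.
Qed.

Lemma within_eps (A : set V) (f : V -> R) (x : V) : {within A, continuous f} -> A x ->
  forall e, 0 < e ->
  exists2 d, 0 < d & forall y, A y -> `|x - y| < d -> `|f x - f y| < e.
Proof.
move=> /subspace_continuousP cf Ax; exact: within_cvg_eps (cf x Ax).
Qed.

Lemma within_cont_at (A : set V) (f : V -> R) (x : V) : {within A, continuous f} ->
  A° x -> {for x, continuous f}.
Proof.
move=> /subspace_continuousP cf Ai.
have Ax : A x := interior_subset Ai.
have := cf x Ax; by rewrite within_interior.
Qed.

Lemma open_interior_closure (O : set V) (x : V) : open O -> O x -> (closure O)° x.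
Proof.
move=> oO Ox; rewrite /interior; apply: filterS (subset_closure (A:=O)) _.
exact: open_nbhs_nbhs.
Qed.

Lemma cont_eps (f : V -> R) (x : V) : {for x, continuous f} ->
  forall e, 0 < e -> exists2 d, 0 < d & forall y, `|x - y| < d -> `|f x - f y| < e.
Proof.
move=> /cvgrPdist_lt cf e e0; exact: near_eps (cf e e0).
Qed.

Lemma open_eps (O : set V) (x : V) : open O -> O x ->
  exists2 d, 0 < d & forall y, `|x - y| < d -> O y.
Proof.
move=> oO Ox; apply: near_eps; exact: open_nbhs_nbhs.
Qed.


Lemma cvg_dotv_coord {T : Type} (F : set_system T) {FF : Filter F} (G : T -> V) (a v : V) :
  (forall i, (fun t => G t 0 i) @ F --> a 0 i) ->
  (fun t => dotv (G t) v) @ F --> dotv a v.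
Proof.
move=> hi; rewrite /dotv.
elim: (index_enum _) => [|i s IH].
  by rewrite big_nil; under eq_fun do rewrite big_nil; exact: cvg_cst.
rewrite big_cons; under eq_fun do rewrite big_cons.
apply: cvgD => //; apply: cvgMl; exact: hi.
Qed.

Lemma cvg_dotv {T : Type} (F : set_system T) {FF : Filter F} (G : T -> V) (a v : V) :
  G @ F --> a -> (fun t => dotv (G t) v) @ F --> dotv a v.
Proof.
move=> hG; apply: cvg_dotv_coord => i.
exact: (cvg_comp _ _ hG (@coord_continuous R _ _ 0 i a)).
Qed.

Lemma cvg_grad_dotv (psi : V -> R) (x v : V) :
  (forall i, 'D_(evec i) psi y @[y --> x] --> 'D_(evec i) psi x) ->
  (fun y => dotv (grad psi y) v) @ x --> dotv (grad psi x) v.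
Proof.
move=> hi; apply: (@cvg_dotv_coord _ (nbhs x) _) => i.
rewrite /grad mxE; under eq_fun do rewrite mxE; exact: hi.
Qed.
End Helpers.

Section H2.
Context {R : realType}.

Lemma mvt1 (h k : R -> R) (a b : R) : a < b ->
  (forall t : R, a <= t <= b -> is_derive t (1:R) h (k t)) ->
  exists2 c, a < c < b & h b - h a = k c * (b - a).
Proof.
move=> ab hd.
have hc : {within `[a, b], continuous h}.
  apply: continuous_in_subspaceT => x; rewrite inE /= in_itv /= => xab.
  have := hd x xab => -[dx _].
  by apply: differentiable_continuous; apply/derivable1_diffP.
have [c cab E] : exists2 c, c \in `]a, b[ & h b - h a = k c * (b - a).
  apply: MVT ab _ hc => x; rewrite in_itv /= => /andP[xa xb].
  by apply: hd; rewrite !ltW.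
by exists c => //; move: cab; rewrite in_itv.
Qed.
End H2.


Section B.
Context {R : realType} {n : nat}.
Local Notation V := 'rV[R]_n.

Lemma mvt_line (F : V -> R) (y v : V) (s t : R) : s < t ->
  (forall c, s <= c <= t -> differentiable F (y + c *: v)) ->
  exists2 c, s < c < t &
    F (y + t *: v) - F (y + s *: v) = dotv (grad F (y + c *: v)) v * (t - s).
Proof.
move=> st hd.
apply: (@mvt1 R (fun c => F (y + c *: v)) (fun c => dotv (grad F (y + c *: v)) v)) => // c cst.
have := line_is_derive (diff_derivable (v:=v) (hd c cst)).
by rewrite grad_dir //; apply: hd.
Qed.

End B.


Section C.
Context {R : realType} {n : nat}.
Local Notation V := 'rV[R]_n.

Lemma small_t {d e K : R} : 0 < d -> 0 < e -> 0 <= K ->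
  exists t, [/\ 0 < t, t < d & t * K < e].
Proof.
move=> d0 e0 K0.
exists (Num.min (d / 2) (e / (2 * (K + 1)))).
have h1 : 0 < e / (2 * (K + 1)) by apply: divr_gt0 => //; lra.
have h2 : 0 < d / 2 by lra.
have hm1 : Num.min (d / 2) (e / (2 * (K + 1))) <= d / 2 by rewrite ge_min lexx.
have hm2 : Num.min (d / 2) (e / (2 * (K + 1))) <= e / (2 * (K + 1)) by rewrite ge_min lexx orbT.
have hm0 : 0 < Num.min (d / 2) (e / (2 * (K + 1))) by rewrite lt_min h1 h2.
split => //; first lra.
set m := Num.min _ _ in hm1 hm2 hm0 *.
have : m * (2 * (K + 1)) <= e.
  by rewrite -ler_pdivlMr //; lra.
nra.
Qed.

Lemma dist_line (x0 v : V) (t : R) : 0 <= t -> `|x0 - (x0 + t *: v)| = t * `|v|.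
Proof. by move=> t0; rewrite opprD addrA subrr add0r normrN normrZ ger0_norm. Qed.

Lemma ray_closure (A : set V) (x0 v : V) :
  (exists2 d, 0 < d & forall t, 0 < t < d -> A (x0 + t *: v)) -> closure A x0.
Proof.
move=> [d d0 hA] B /near_eps [e e0 he].
have [t [t0 td tv]] := small_t d0 e0 (normr_ge0 v).
exists (x0 + t *: v); split; first by apply: hA; rewrite t0 td.
by apply: he; rewrite dist_line // ltW.
Qed.


Lemma ray_est (F : V -> R) (A : set V) (G : V -> V) (x0 v : V) :
  C1_closure F A G -> F x0 = 0 ->
  (exists2 d, 0 < d & forall t, 0 < t < d -> A (x0 + t *: v)) ->
  forall e, 0 < e -> exists2 d', 0 < d' & forall t, 0 < t < d' ->
    `|F (x0 + t *: v) - dotv (G x0) v * t| <= e * t.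
Proof.
rewrite /C1_closure => -[C1 [Fc [Gc GE]]] F0 hA e e0.
have clx : closure A x0 := ray_closure hA.
case: hA => d d0 hA.
have DG : (fun y => dotv (G y) v) @ within (closure A) (nbhs x0) --> dotv (G x0) v.
  by apply: cvg_dotv; move/subspace_continuousP: Gc; apply.
have [d1 d10 hd1] := within_cvg_eps DG e0.
have K0 : 0 < `|v| + 1 by rewrite ltr_wpDl.
exists (Num.min d (d1 / (`|v| + 1))).
  by rewrite lt_min d0 divr_gt0.
move=> t /andP[t0]; rewrite lt_min => /andP[td tv].
have tv' : t * `|v| < d1.
  move: tv; rewrite ltr_pdivlMr // => tv.
  apply: le_lt_trans tv; rewrite ler_pM2l //; lra.
set D0 := dotv (G x0) v.
apply/ler_addgt0Pr => eta eta0.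
have eta2 : 0 < eta / 2 by lra.
have [d2 d20 hd2] := within_eps Fc clx eta2.
have [s1 [s10 s1t s1v]] := small_t t0 d20 (normr_ge0 v).
have [s [s0 ss1 sD]] := small_t s10 eta2 (normr_ge0 D0).
have st : s < t by lra.
have [c /andP[sc ct] E] : exists2 c, s < c < t &
    F (x0 + t *: v) - F (x0 + s *: v) = dotv (grad F (x0 + c *: v)) v * (t - s).
  apply: mvt_line => // c /andP[sc ct].
  have : A (x0 + c *: v) by apply: hA; apply/andP; split; lra.
  by move=> /C1 [].
have Ac : A (x0 + c *: v) by apply: hA; apply/andP; split; lra.
rewrite -GE // in E.
have hc : `|D0 - dotv (G (x0 + c *: v)) v| < e.
  apply: hd1; first exact: subset_closure.
  rewrite dist_line; last lra.
  apply: le_lt_trans tv'; apply: ler_wpM2r; [exact: normr_ge0 | lra].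
have hs : `|F x0 - F (x0 + s *: v)| < eta / 2.
  apply: hd2.
    apply: subset_closure; apply: hA; apply/andP; split; lra.
  rewrite dist_line; last lra.
  apply: le_lt_trans s1v; apply: ler_wpM2r; [exact: normr_ge0 | lra].
rewrite F0 sub0r normrN in hs.
set a := F (x0 + t *: v) in E *; set b := F (x0 + s *: v) in E hs *.
set Dc := dotv (G (x0 + c *: v)) v in E hc.
move: hc hs; rewrite !ltr_norml => /andP[hc1 hc2] /andP[hs1 hs2].
have hD1 : s * D0 <= s * `|D0| by apply: ler_wpM2l; [lra | exact: ler_norm].
have hD2 : - (s * `|D0|) <= s * D0.
  rewrite -mulrN; apply: ler_wpM2l; first lra.
  by rewrite lerNl -normrN ler_norm.
have hp1 : (D0 - Dc) * (t - s) <= e * (t - s) by apply: ler_wpM2r; lra.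
have hp2 : (- e) * (t - s) <= (D0 - Dc) * (t - s) by apply: ler_wpM2r; lra.
have -> : a - D0 * t = b - (D0 - Dc) * (t - s) - s * D0.
  have -> : a = b + Dc * (t - s) by rewrite -E; ring.
  ring.
rewrite ler_norml; apply/andP; split; nra.
Qed.

Lemma ray_le (F1 F2 : V -> R) (A1 A2 : set V) (G1 G2 : V -> V) (x0 v : V) :
  C1_closure F1 A1 G1 -> C1_closure F2 A2 G2 -> F1 x0 = 0 -> F2 x0 = 0 ->
  (exists2 d, 0 < d & forall t, 0 < t < d -> A1 (x0 + t *: v)) ->
  (exists2 d, 0 < d & forall t, 0 < t < d -> A2 (x0 + t *: v)) ->
  (exists2 d, 0 < d & forall t, 0 < t < d -> F1 (x0 + t *: v) <= F2 (x0 + t *: v)) ->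
  dotv (G1 x0) v <= dotv (G2 x0) v.
Proof.
move=> C1 C2 F10 F20 h1 h2 [d d0 hd].
rewrite leNgt; apply/negP => lt21.
set e := (dotv (G1 x0) v - dotv (G2 x0) v) / 4.
have e0 : 0 < e by rewrite /e; lra.
have [d1 d10 hd1] := ray_est C1 F10 h1 e0.
have [d2 d20 hd2] := ray_est C2 F20 h2 e0.
set t := Num.min d (Num.min d1 d2) / 2.
have m0 : 0 < Num.min d (Num.min d1 d2) by rewrite !lt_min d0 d10 d20.
have hm1 : Num.min d (Num.min d1 d2) <= d by rewrite ge_min lexx.
have hm2 : Num.min d (Num.min d1 d2) <= d1 by rewrite !ge_min lexx orbT.
have hm3 : Num.min d (Num.min d1 d2) <= d2 by rewrite !ge_min lexx !orbT.
have t0 : 0 < t by rewrite /t; lra.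
have tt : 0 < t < d by apply/andP; split => //; rewrite /t; lra.
have := hd t tt.
have tdhd1d1 : 0 < t < d1 by apply/andP; split => //; rewrite /t; lra.
have := hd1 t tdhd1d1.
have tdhd2d2 : 0 < t < d2 by apply/andP; split => //; rewrite /t; lra.
have := hd2 t tdhd2d2.
rewrite !ler_norml => /andP[a1 a2] /andP[b1 b2] c.
have : (dotv (G1 x0) v - dotv (G2 x0) v) * t <= 2 * e * t by lra.
rewrite /e; nra.
Qed.

Lemma ray_ge0 (F : V -> R) (A : set V) (G : V -> V) (x0 v : V) :
  C1_closure F A G -> F x0 = 0 ->
  (exists2 d, 0 < d & forall t, 0 < t < d -> A (x0 + t *: v)) ->
  (exists2 d, 0 < d & forall t, 0 < t < d -> 0 <= F (x0 + t *: v)) ->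
  0 <= dotv (G x0) v.
Proof.
move=> C1 F0 h1 [d d0 hd].
rewrite leNgt; apply/negP => lt0.
set e := - dotv (G x0) v / 2.
have e0 : 0 < e by rewrite /e; lra.
have [d1 d10 hd1] := ray_est C1 F0 h1 e0.
set t := Num.min d d1 / 2.
have m0 : 0 < Num.min d d1 by rewrite !lt_min d0 d10.
have hm1 : Num.min d d1 <= d by rewrite ge_min lexx.
have hm2 : Num.min d d1 <= d1 by rewrite !ge_min lexx orbT.
have t0 : 0 < t by rewrite /t; lra.
have tdhdd : 0 < t < d by apply/andP; split => //; rewrite /t; lra.
have := hd t tdhdd.
have tdhd1d1 : 0 < t < d1 by apply/andP; split => //; rewrite /t; lra.
have := hd1 t tdhd1d1.
rewrite !ler_norml => /andP[a1 a2] c.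
rewrite /e in a2; nra.
Qed.

End C.


Section D.
Context {R : realType} {n : nat}.
Local Notation V := 'rV[R]_n.

Lemma near_right_eps (P : R -> Prop) : (\forall t \near 0^'+, P t) ->
  exists2 d, 0 < d & forall t, 0 < t < d -> P t.
Proof.
move=> /nbhs_ballP [d d0 hd]; exists d => // t /andP[t0 td]; apply: hd => //.
by rewrite -ball_normE /ball_ /= sub0r normrN gtr0_norm.
Qed.

Lemma eps_arg (a b : R) : 0 <= b -> (forall e, 0 < e -> 0 <= a + e * b) -> 0 <= a.
Proof.
move=> b0 h; rewrite leNgt; apply/negP => a0.
have e0 : 0 < - a / (2 * (b + 1)) by apply: divr_gt0; lra.
have := h _ e0.
have : - a / (2 * (b + 1)) * (2 * (b + 1)) = - a by rewrite divfK //; lra.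
nra.
Qed.

Lemma tangency (G nu : V) : dotv nu nu = 1 ->
  (forall v, 0 < dotv v nu -> 0 <= dotv G v) ->
  forall v, dotv G v = dotv G nu * dotv nu v.
Proof.
move=> nu1 h v.
have Gnu : 0 <= dotv G nu by apply: h; rewrite nu1.
set v' := v - dotv nu v *: nu.
have v'0 : dotv v' nu = 0 by rewrite /v' dotvBl dotvZl nu1 mulr1 dotvC subrr.
have key : forall u, dotv u nu = 0 -> 0 <= dotv G u.
  move=> u u0; apply: (eps_arg Gnu) => e e0.
  rewrite -dotvZr -dotvDr; apply: h.
  by rewrite dotvDl u0 add0r dotvZl nu1 mulr1.
have h1 := key v' v'0.
have h2 : 0 <= dotv G (- v') by apply: key; rewrite dotvNl v'0 oppr0.
rewrite dotvNr in h2.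
have : dotv G v' = 0 by lra.
rewrite /v' dotvBr dotvZr => /eqP; rewrite subr_eq0 => /eqP ->.
by rewrite mulrC.
Qed.

Lemma seg_pos (h : V -> R) (p q : V) :
  (forall l : R, 0 <= l <= 1 ->
     h (p + l *: (q - p)) != 0 /\ {for p + l *: (q - p), continuous h}) ->
  0 < h p -> 0 < h q.
Proof.
move=> hg hp; rewrite ltNge; apply/negP => hq.
have cont : {within `[0, 1], continuous (fun l : R => h (p + l *: (q - p)))}.
  apply: continuous_in_subspaceT => l; rewrite inE /= in_itv /= => l01.
  have [_ hc] := hg l l01.
  have hl : {for l, continuous (fun l : R => p + l *: (q - p))}.
    apply: continuousD; first exact: cst_continuous.
    exact: continuousZl.
  exact: (continuous_comp hl hc).
have [l l01 hl0] : exists2 l, l \in `[(0:R), 1] & h (p + l *: (q - p)) = 0.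
  apply: IVT => //.
  rewrite scale0r addr0 scale1r addrC subrK.
  apply/andP; split; [rewrite ge_min; apply/orP; right | rewrite le_max; apply/orP; left]; lra.
have := hg l; rewrite in_itv /= in l01 => /(_ l01) [] /eqP; done.
Qed.

Lemma ball_convex (x0 y1 y2 : V) (d l : R) : `|x0 - y1| < d -> `|x0 - y2| < d ->
  0 <= l <= 1 -> `|x0 - (y1 + l *: (y2 - y1))| < d.
Proof.
move=> h1 h2 /andP[l0 l1].
have -> : x0 - (y1 + l *: (y2 - y1)) = (1 - l) *: (x0 - y1) + l *: (x0 - y2).
  by apply/matrixP => i j; rewrite !mxE; ring.
apply: (le_lt_trans (ler_normD _ _)); rewrite !normrZ !ger0_norm; try lra.
have : (1 - l) * `|x0 - y1| <= (1 - l) * d by apply: ler_wpM2l; lra.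
have : l * `|x0 - y2| <= l * d by apply: ler_wpM2l; lra.
case: (ltP 0 l) => hl.
  have : l * `|x0 - y2| < l * d by rewrite ltr_pM2l.
  nra.
have -> : l = 0 by lra.
rewrite mul0r addr0 subr0 !mul1r; done.
Qed.

Lemma dist_add (x0 y m : V) (s : R) : 0 <= s -> `|x0 - (y + s *: m)| <= `|x0 - y| + s * `|m|.
Proof.
move=> s0; rewrite opprD addrA; apply: (le_trans (ler_normD _ _)).
by rewrite normrN normrZ ger0_norm.
Qed.

Lemma mono_ge (psi : V -> R) (x0 m : V) (r k : R) :
  (forall y, `|x0 - y| < r -> differentiable psi y /\ k <= dotv (grad psi y) m) ->
  forall y s, 0 <= s -> `|x0 - y| + s * `|m| < r -> psi y + k * s <= psi (y + s *: m).
Proof.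
move=> hr y s s0 hs.
case: (ltP 0 s) => sp; last first.
  have -> : s = 0 by lra.
  by rewrite scale0r addr0 mulr0 addr0.
have hb : forall c, 0 <= c <= s -> `|x0 - (y + c *: m)| < r.
  move=> c /andP[c0 cs]; apply: (le_lt_trans (dist_add _ _ _ c0)); apply: le_lt_trans hs.
  by rewrite lerD2l; apply: ler_wpM2r.
have [c /andP[c0 cs] E] : exists2 c, 0 < c < s &
    psi (y + s *: m) - psi (y + 0 *: m) = dotv (grad psi (y + c *: m)) m * (s - 0).
  apply: mvt_line => // c cs'; by case: (hr _ (hb c cs')).
rewrite scale0r addr0 subr0 in E.
have : k <= dotv (grad psi (y + c *: m)) m.
  by case: (hr _ (hb c _)) => //; apply/andP; split; lra.
nra.
Qed.

Lemma mono_le (psi : V -> R) (x0 m : V) (r k : R) :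
  (forall y, `|x0 - y| < r -> differentiable psi y /\ dotv (grad psi y) m <= k) ->
  forall y s, 0 <= s -> `|x0 - y| + s * `|m| < r -> psi (y + s *: m) <= psi y + k * s.
Proof.
move=> hr y s s0 hs.
case: (ltP 0 s) => sp; last first.
  have -> : s = 0 by lra.
  by rewrite scale0r addr0 mulr0 addr0.
have hb : forall c, 0 <= c <= s -> `|x0 - (y + c *: m)| < r.
  move=> c /andP[c0 cs]; apply: (le_lt_trans (dist_add _ _ _ c0)); apply: le_lt_trans hs.
  by rewrite lerD2l; apply: ler_wpM2r.
have [c /andP[c0 cs] E] : exists2 c, 0 < c < s &
    psi (y + s *: m) - psi (y + 0 *: m) = dotv (grad psi (y + c *: m)) m * (s - 0).
  apply: mvt_line => // c cs'; by case: (hr _ (hb c cs')).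
rewrite scale0r addr0 subr0 in E.
have : dotv (grad psi (y + c *: m)) m <= k.
  by case: (hr _ (hb c _)) => //; apply/andP; split; lra.
nra.
Qed.

Lemma path3 (f : V -> R) (B Q : V -> Prop) (v : V) :
  (forall y1 y2 l, B y1 -> B y2 -> 0 <= l <= 1 -> B (y1 + l *: (y2 - y1))) ->
  (forall y, B y -> Q y -> forall l : R, 0 <= l <= 1 ->
     f (y + l *: v) != 0 /\ {for y + l *: v, continuous f}) ->
  (forall m, B m -> f (m + v) != 0 /\ {for m + v, continuous f}) ->
  forall y1 y2, B y1 -> B y2 -> Q y1 -> Q y2 -> 0 < f y1 -> 0 < f y2.
Proof.
move=> Bc hv hm y1 y2 B1 B2 Q1 Q2 f1.
have f1' : 0 < f (y1 + v).
  apply: (seg_pos (p := y1)) f1 => l l01.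
  have -> : y1 + l *: (y1 + v - y1) = y1 + l *: v.
    by apply/matrixP => i j; rewrite !mxE; ring.
  by apply: hv.
have f2' : 0 < f (y2 + v).
  apply: (seg_pos (p := y1 + v)) f1' => l l01.
  have -> : y1 + v + l *: (y2 + v - (y1 + v)) = (y1 + l *: (y2 - y1)) + v.
    by apply/matrixP => i j; rewrite !mxE; ring.
  by apply: hm; apply: Bc.
apply: (seg_pos (p := y2 + v)) f2' => l l01.
have -> : y2 + v + l *: (y2 - (y2 + v)) = y2 + (1 - l) *: v.
  by apply/matrixP => i j; rewrite !mxE; ring.
apply: hv => //; lra.
Qed.

End D.


Section E.
Context {R : realType} {n : nat}.
Local Notation V := 'rV[R]_n.

Lemma region (O : set V) (f psi : V -> R) (U : set V) (x0 nu : V) (c d0 : R) :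
  open O -> (forall x, O x -> {for x, continuous f}) -> O x0 -> f x0 = 0 ->
  open U -> U x0 -> C1_on psi U -> (forall y, U y -> (f y = 0 <-> psi y = 0)) ->
  0 < c -> grad psi x0 = c *: nu -> dotv nu nu = 1 ->
  0 < d0 -> (forall t, 0 < t < d0 -> 0 < f (x0 + t *: nu)) ->
  exists2 del, 0 < del &
   [/\ forall y, `|x0 - y| < del -> O y /\ U y,
       forall y, `|x0 - y| < del -> 0 < psi y -> 0 < f y &
       (forall y, `|x0 - y| < del -> psi y < 0 -> f y < 0) \/
       (forall y, `|x0 - y| < del -> psi y < 0 -> 0 < f y)].
Proof.
move=> oO fc Ox0 fx0 oU Ux0 C1 hU c0 gpsi nu1 d00 hd0.
have psi0 : psi x0 = 0 by apply/(hU x0 Ux0).1.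
have [dpsi hpar] := C1 x0 Ux0.
have DG := cvg_grad_dotv (v:=nu) hpar.
rewrite gpsi dotvZl nu1 mulr1 in DG.
have c2 : 0 < c / 2 by lra.
have [r1 r10 hr1] : exists2 r1, 0 < r1 &
    forall y, `|x0 - y| < r1 -> `|c - dotv (grad psi y) nu| < c / 2.
  by apply: near_eps; move/cvgrPdist_lt: DG; apply.
have [r2 r20 hr2] := open_eps oO Ox0.
have [r3 r30 hr3] := open_eps oU Ux0.
set r := Num.min r1 (Num.min r2 r3).
have r0 : 0 < r by rewrite !lt_min r10 r20 r30.
have hb : forall y, `|x0 - y| < r ->
    [/\ O y, U y, differentiable psi y & c / 2 <= dotv (grad psi y) nu].
  move=> y; rewrite !lt_min => /andP[y1 /andP[y2 y3]].
  have Uy := hr3 y y3.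
  split => //; [exact: hr2 | exact: (C1 y Uy).1|].
  have := hr1 y y1; rewrite ltr_norml => /andP[a b]; lra.
have hmg : forall y s, 0 <= s -> `|x0 - y| + s * `|nu| < r ->
    psi y + c / 2 * s <= psi (y + s *: nu).
  by apply: mono_ge => y hy; case: (hb y hy).
have hml : forall y s, 0 <= s -> `|x0 - y| + s * `|- nu| < r ->
    psi (y + s *: - nu) <= psi y + - (c / 2) * s.
  apply: mono_le => y hy; case: (hb y hy) => _ _ d h; split => //.
  rewrite dotvNr; lra.
rewrite normrN in hml.
have K0 : 0 < `|nu| + 1 by rewrite ltr_wpDl.
set S := r / (4 * (`|nu| + 1)).
have S0 : 0 < S by rewrite /S divr_gt0 //; lra.
have Snu : S * `|nu| <= r / 4.
  have : S * (4 * (`|nu| + 1)) = r by rewrite /S divfK //; lra.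
  have := normr_ge0 nu; nra.
have cS : 0 < c * S / 4 by apply: divr_gt0 => //; apply: mulr_gt0.
have [d1 d10 hd1] := cont_eps (differentiable_continuous dpsi) cS.
rewrite psi0 in hd1.
set del := Num.min d1 (r / 4).
have del0 : 0 < del by rewrite lt_min d10; lra.
have hB : forall y, `|x0 - y| < del -> `|x0 - y| < r / 4 /\ `|psi y| < c * S / 4.
  move=> y; rewrite lt_min => /andP[a b]; split => //.
  by have := hd1 y a; rewrite sub0r normrN.
have good : forall y, `|x0 - y| < r -> psi y != 0 -> f y != 0 /\ {for y, continuous f}.
  move=> y hy py; case: (hb y hy) => Oy Uy _ _; split; last exact: fc.
  by apply/eqP => /(hU y Uy).1 /eqP; rewrite (negbTE py).
have Bc : forall y1 y2 l, `|x0 - y1| < del -> `|x0 - y2| < del -> 0 <= l <= 1 ->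
    `|x0 - (y1 + l *: (y2 - y1))| < del.
  by move=> y1 y2 l; apply: ball_convex.
have nun := normr_ge0 nu.
have ppos := path3 (f := f) (B := fun y => `|x0 - y| < del) (Q := fun y => 0 < psi y)
  (v := S *: nu) Bc.
have hpos : forall y, `|x0 - y| < del -> 0 < psi y -> 0 < f y.
  move=> y By py.
  have [t [t0 td tnu]] := small_t d00 del0 nun.
  have y2B : `|x0 - (x0 + t *: nu)| < del by rewrite dist_line // ltW.
  have y2p : 0 < psi (x0 + t *: nu).
    have H : `|x0 - x0| + t * `|nu| < r.
      rewrite subrr normr0 add0r; have : del <= r / 4 by rewrite /del ge_min lexx orbT.
      lra.
    have := hmg x0 t (ltW t0) H; rewrite psi0 add0r.
    have : 0 < c / 2 * t by apply: mulr_gt0.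
    lra.
  apply: (ppos _ _ (x0 + t *: nu) y) => //.
  - move=> y' By' py' l /andP[l0 l1]; rewrite scalerA.
    have [a _] := hB _ By'.
    have hl : `|x0 - y'| + l * S * `|nu| < r.
      have : l * S * `|nu| <= S * `|nu| by rewrite -mulrA ler_piMl // mulr_ge0 // ltW.
      lra.
    apply: good; first exact: le_lt_trans (dist_add _ _ _ (mulr_ge0 l0 (ltW S0))) hl.
    apply: lt0r_neq0.
    have := hmg y' (l * S) (mulr_ge0 l0 (ltW S0)) hl.
    have : 0 <= c / 2 * (l * S) by apply: mulr_ge0; [lra | apply: mulr_ge0 => //; lra].
    lra.
  - move=> m Bm; have [a b] := hB _ Bm.
    have hl : `|x0 - m| + S * `|nu| < r by lra.
    apply: good; first exact: le_lt_trans (dist_add _ _ _ (ltW S0)) hl.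
    apply: lt0r_neq0.
    have := hmg m S (ltW S0) hl.
    move: b; rewrite ltr_norml => /andP[b1 b2].
    have : c / 2 * S = 2 * (c * S / 4) by field.
    lra.
  - by apply: hd0; rewrite t0.
have pneg := path3 (f := f) (B := fun y => `|x0 - y| < del) (Q := fun y => psi y < 0)
  (v := S *: - nu) Bc.
have hvn : forall y', `|x0 - y'| < del -> psi y' < 0 -> forall l : R, 0 <= l <= 1 ->
    f (y' + l *: (S *: - nu)) != 0 /\ {for y' + l *: (S *: - nu), continuous f}.
  move=> y' By' py' l /andP[l0 l1]; rewrite scalerA.
  have [a _] := hB _ By'.
  have hl : `|x0 - y'| + l * S * `|nu| < r.
    have : l * S * `|nu| <= S * `|nu| by rewrite -mulrA ler_piMl // mulr_ge0 // ltW.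
    lra.
  apply: good.
    apply: le_lt_trans (dist_add _ _ _ (mulr_ge0 l0 (ltW S0))) _.
    by rewrite normrN.
  apply: ltr0_neq0.
  have := hml y' (l * S) (mulr_ge0 l0 (ltW S0)) hl.
  have : 0 <= c / 2 * (l * S) by apply: mulr_ge0; [lra | apply: mulr_ge0 => //; lra].
  lra.
have hmn : forall m, `|x0 - m| < del ->
    f (m + S *: - nu) != 0 /\ {for m + S *: - nu, continuous f}.
  move=> m Bm; have [a b] := hB _ Bm.
  have hl : `|x0 - m| + S * `|nu| < r by lra.
  apply: good.
    by apply: le_lt_trans (dist_add _ _ _ (ltW S0)) _; rewrite normrN.
  apply: ltr0_neq0.
  have := hml m S (ltW S0) hl.
  move: b; rewrite ltr_norml => /andP[b1 b2].
  have : c / 2 * S = 2 * (c * S / 4) by field.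
  lra.
have fnz : forall y, `|x0 - y| < del -> psi y < 0 -> f y != 0.
  move=> y By py; have [a _] := hB _ By.
  by apply: (good y _ (ltr0_neq0 py)).1; lra.
exists del => //; split => //.
  move=> y By; have [a _] := hB _ By; have [] := hb y _; first lra.
  by [].
case: (pselect (exists y, [/\ `|x0 - y| < del, psi y < 0 & f y < 0])).
  move=> [y0 [B0 p0 f0]]; left => y By py.
  rewrite ltNge; apply/negP => fy.
  have fy' : 0 < f y by rewrite lt_def fy (fnz y By py).
  have := pneg hvn hmn y y0 By B0 py p0 fy'; lra.
move=> nex; right => y By py.
rewrite lt_def (fnz y By py) /= leNgt; apply/negP => fy.
by apply: nex; exists y.
Qed.

End E.


Section F.
Context {R : realType} {n : nat}.
Local Notation V := 'rV[R]_n.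

Lemma ray_quot (psi : V -> R) (x0 v : V) : derivable psi x0 v -> psi x0 = 0 ->
  forall e, 0 < e -> exists2 d, 0 < d & forall t, 0 < t < d ->
    `|'D_v psi x0 * t - psi (x0 + t *: v)| <= e * t.
Proof.
move=> dv p0 e e0.
have : (fun h : R => h^-1 *: ((psi \o shift x0) (h *: v) - psi x0)) @ 0^' --> 'D_v psi x0 := dv.
move=> /cvgrPdist_lt /(_ e e0) /nbhs_ballP [d d0 hd].
exists d => // t /andP[t0 td].
have := hd t; rewrite -ball_normE /ball_ /= sub0r normrN gtr0_norm // => /(_ td).
move=> /(_ (lt0r_neq0 t0)) /= h.
rewrite p0 subr0 [t *: v + x0]addrC in h.
have -> : 'D_v psi x0 * t - psi (x0 + t *: v) = ('D_v psi x0 - t^-1 *: psi (x0 + t *: v)) * t.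
  by rewrite mulrBl -[t^-1 *: _]/(t^-1 * _) mulrAC mulVf ?gt_eqF // mul1r.
by rewrite normrM (gtr0_norm t0) ler_pM2r // ltW.
Qed.

Definition ray_in (A : set V) (x0 v : V) :=
  exists2 d, 0 < d & forall t, 0 < t < d -> A (x0 + t *: v).

Lemma ray_sub (A B : set V) x0 v : (forall y, A y -> B y) -> ray_in A x0 v -> ray_in B x0 v.
Proof. by move=> AB [d d0 h]; exists d => // t /h /AB. Qed.

Lemma ray_and (A B : set V) x0 v : ray_in A x0 v -> ray_in B x0 v ->
  ray_in (fun y => A y /\ B y) x0 v.
Proof.
move=> [d1 d10 h1] [d2 d20 h2]; exists (Num.min d1 d2); first by rewrite lt_min d10 d20.
move=> t /andP[t0]; rewrite lt_min => /andP[a b]; split.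
  by apply: h1; rewrite t0 a.
by apply: h2; rewrite t0 b.
Qed.

Lemma ray_ball (x0 v : V) (del : R) : 0 < del -> ray_in (fun y => `|x0 - y| < del) x0 v.
Proof.
move=> d0; have K0 : 0 < `|v| + 1 by rewrite ltr_wpDl.
exists (del / (`|v| + 1)); first exact: divr_gt0.
move=> t /andP[t0]; rewrite ltr_pdivlMr // => h.
rewrite dist_line ?ltW //; apply: le_lt_trans h; apply: ler_wpM2l; [exact: ltW | lra].
Qed.

Lemma ray_pos (psi : V -> R) (x0 v : V) : derivable psi x0 v -> psi x0 = 0 ->
  0 < 'D_v psi x0 -> ray_in [set y | 0 < psi y] x0 v.
Proof.
move=> dv p0 L0; have e0 : 0 < 'D_v psi x0 / 2 by lra.
have [d d0 h] := ray_quot dv p0 e0; exists d => // t tt; have := h t tt.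
case/andP: tt => t0 _; rewrite ler_norml => /andP[a b] /=.
have : 0 < 'D_v psi x0 / 2 * t by apply: mulr_gt0.
nra.
Qed.

Lemma ray_neg (psi : V -> R) (x0 v : V) : derivable psi x0 v -> psi x0 = 0 ->
  'D_v psi x0 < 0 -> ray_in [set y | psi y < 0] x0 v.
Proof.
move=> dv p0 L0; have e0 : 0 < - 'D_v psi x0 / 2 by lra.
have [d d0 h] := ray_quot dv p0 e0; exists d => // t tt; have := h t tt.
case/andP: tt => t0 _; rewrite ler_norml => /andP[a b] /=.
have : 0 < - 'D_v psi x0 / 2 * t by apply: mulr_gt0.
nra.
Qed.

Lemma fpos_ge0 (f : V -> R) x : 0 <= fpos f x.
Proof. by rewrite /fpos; case: ifP. Qed.

Lemma fneg_ge0 (f : V -> R) x : 0 <= fneg f x.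
Proof. by rewrite /fneg; case: ifP. Qed.

Lemma fpos0 (f : V -> R) x : f x = 0 -> fpos f x = 0.
Proof. by rewrite /fpos => ->; rewrite ltxx. Qed.

Lemma fneg0 (f : V -> R) x : f x = 0 -> fneg f x = 0.
Proof. by rewrite /fneg => ->; rewrite ltxx. Qed.

Lemma fposE (f : V -> R) x : 0 < f x -> fpos f x = f x.
Proof. by rewrite /fpos => h; rewrite h gtr0_norm. Qed.

Lemma fnegE (f : V -> R) x : f x < 0 -> fneg f x = - f x.
Proof. by rewrite /fneg => h; rewrite h ltr0_norm. Qed.

End F.


Section G.
Context {R : realType} {n : nat}.
Local Notation V := 'rV[R]_n.

Lemma ray_trivial (F : V -> R) x0 v : (forall y, 0 <= F y) ->
  exists2 d : R, 0 < d & forall t, 0 < t < d -> 0 <= F (x0 + t *: v).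
Proof. by move=> h; exists 1 => // t _; apply: h. Qed.

Lemma summary (O : set V) (f : V -> R) (Gp Gm : V -> V) (x0 nu : V) :
  open O -> {within closure O, continuous f} ->
  C1_closure (fpos f) (posph O f) Gp -> C1_closure (fneg f) (negph O f) Gm ->
  O x0 -> f x0 = 0 -> normal_into [set y | f y = 0] [set y | 0 < f y] x0 nu ->
  dotv nu nu = 1 /\
  exists al be : R,
   [/\ 0 <= al, 0 <= be, nder (posph O f) Gp x0 nu = al,
     nder (negph O f) Gm x0 nu = - be &
     (forall v, dotv (Gp x0) v = al * dotv nu v)] /\
   [/\ (forall v, 0 < dotv v nu -> ray_in (posph O f) x0 v),
     ((0 < al \/ 0 < be) -> ray_in (negph O f) x0 (- nu)) &
     (forall v, ray_in (negph O f) x0 v -> forall u, dotv (Gm x0) u = - be * dotv nu u)].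
Proof.
move=> oO fcO Cp Cm Ox0 fx0 [nu1 [[psi [U [oU [Ux0 [C1 [hU [c [c0 gpsi]]]]]]]] hnear]].
split => //.
have [d0 d00 hd0] := near_right_eps hnear.
have fc : forall x, O x -> {for x, continuous f}.
  by move=> x Ox; apply: within_cont_at fcO (open_interior_closure oO Ox).
have [del del0 [hOU hpos halt]] := region oO fc Ox0 fx0 oU Ux0 C1 hU c0 gpsi nu1 d00 hd0.
have psi0 : psi x0 = 0 by apply/(hU x0 Ux0).
have dpsi : differentiable psi x0 := (C1 x0 Ux0).1.
have Dv : forall v, 'D_v psi x0 = c * dotv nu v.
  by move=> v; rewrite grad_dir // gpsi dotvZl.
have rpos : forall v, 0 < dotv v nu -> ray_in (posph O f) x0 v.
  move=> v hv.
  apply: (ray_sub _ (ray_and (ray_ball x0 v del0) (ray_pos (diff_derivable (v:=v) dpsi) psi0 _))).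
    by move=> y [By py]; split; [exact: (hOU y By).1 | exact: hpos].
  by rewrite Dv dotvC; exact: mulr_gt0.
have rneg : forall v, dotv v nu < 0 ->
    ray_in (fun y => `|x0 - y| < del /\ psi y < 0) x0 v.
  move=> v hv; apply: (ray_and (ray_ball x0 v del0) (ray_neg (diff_derivable (v:=v) dpsi) psi0 _)).
  by rewrite Dv dotvC pmulr_rlt0.
have Gp_ge : forall v, 0 < dotv v nu -> 0 <= dotv (Gp x0) v.
  move=> v hv; apply: (ray_ge0 Cp (fpos0 fx0) (rpos v hv)).
  exact: ray_trivial (@fpos_ge0 _ _ f).
have al0 : 0 <= dotv (Gp x0) nu by apply: Gp_ge; rewrite nu1.
have formP := tangency nu1 Gp_ge.
have clP : closure (posph O f) x0 by apply: (ray_closure (rpos nu _)); rewrite nu1.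
have nderP : nder (posph O f) Gp x0 nu = dotv (Gp x0) nu by rewrite /nder asboolT.
case: halt => [Alt1|Alt2].
- have rN : forall v, dotv v nu < 0 -> ray_in (negph O f) x0 v.
    move=> v hv; apply: (ray_sub _ (rneg v hv)) => y [By py].
    by split; [exact: (hOU y By).1 | exact: Alt1].
  have Gm_ge : forall v, 0 < dotv v (- nu) -> 0 <= dotv (Gm x0) v.
    move=> v hv; apply: (ray_ge0 Cm (fneg0 fx0) (rN v _)).
      by move: hv; rewrite dotvNr; lra.
    exact: ray_trivial (@fneg_ge0 _ _ f).
  have nu1' : dotv (- nu) (- nu) = 1 by rewrite dotvNl dotvNr opprK.
  have formM := tangency nu1' Gm_ge.
  have be0 : 0 <= dotv (Gm x0) (- nu) by apply: Gm_ge; rewrite nu1'.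
  have rNn : ray_in (negph O f) x0 (- nu).
    by apply: rN; rewrite dotvNl nu1; lra.
  have clN : closure (negph O f) x0 := ray_closure rNn.
  exists (dotv (Gp x0) nu), (dotv (Gm x0) (- nu)); split; split.
  + exact: al0.
  + exact: be0.
  + exact: nderP.
  + by rewrite /nder asboolT // dotvNr opprK.
  + by move=> v; rewrite formP.
  + exact: rpos.
  + by move=> _.
  + move=> v _ u; rewrite formM dotvNl; ring.
- have Gp_ge' : forall v, dotv v nu < 0 -> 0 <= dotv (Gp x0) v.
    move=> v hv; apply: (ray_ge0 Cp (fpos0 fx0)); last exact: ray_trivial (@fpos_ge0 _ _ f).
    apply: (ray_sub _ (rneg v hv)) => y [By py].
    by split; [exact: (hOU y By).1 | exact: Alt2].
  have : 0 <= dotv (Gp x0) (- nu) by apply: Gp_ge'; rewrite dotvNl nu1; lra.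
  rewrite dotvNr => al0'.
  have al00 : dotv (Gp x0) nu = 0 by lra.
  have notclN : ~ closure (negph O f) x0.
    move=> cl.
    have nb : nbhs x0 (fun y => `|x0 - y| < del).
      apply/nbhs_ballP; exists del => // y.
      by rewrite -ball_normE /ball_.
    have [y [[Oy fy] By]] := cl _ nb.
    have [_ Uy] := hOU y By.
    case: (ltgtP (psi y) 0) => py.
    + by have := Alt2 y By py; rewrite /= in fy; lra.
    + by have := hpos y By py; rewrite /= in fy; lra.
    + by move: ((hU y Uy).2 py) => /= fy0; move: fy; rewrite /= fy0 ltxx.
  exists 0, 0; split; split.
  + exact: lexx.
  + exact: lexx.
  + by rewrite nderP al00.
  + by rewrite /nder asboolF // oppr0.
  + by move=> v; rewrite formP al00 mul0r.
  + exact: rpos.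
  + by rewrite ltxx => -[].
  + by move=> v /ray_closure.
Qed.

End G.


Section H.
Context {R : realType} {n : nat}.
Local Notation V := 'rV[R]_n.

Lemma dist_line_abs (x0 v : V) (t : R) : `|x0 - (x0 + t *: v)| = `|t| * `|v|.
Proof. by rewrite opprD addrA subrr add0r normrN normrZ. Qed.

Lemma second_deriv_test (u v : V -> R) (x0 e : V) (del : R) :
  0 < del -> (forall y, `|x0 - y| < del -> v y <= u y) -> u x0 = v x0 ->
  (\forall y \near x0, derivable u y e) ->
  (\forall y \near x0, derivable v y e) ->
  derivable ('D_e u) x0 e -> derivable ('D_e v) x0 e ->
  'D_e ('D_e v) x0 <= 'D_e ('D_e u) x0.
Proof.
move=> del0 vu uv0 nu nv du dv.
rewrite leNgt; apply/negP => hK.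
set K := 'D_e ('D_e u) x0 - 'D_e ('D_e v) x0.
have K0 : K < 0 by rewrite /K; lra.
have [d1 d10 hd1] : exists2 d1, 0 < d1 &
    forall y, `|x0 - y| < d1 -> derivable u y e /\ derivable v y e.
  have [da da0 ha] := near_eps nu; have [db db0 hb] := near_eps nv.
  exists (Num.min da db); first by rewrite lt_min da0 db0.
  by move=> y; rewrite lt_min => /andP[a b]; split; [apply: ha | apply: hb].
set h := fun s : R => u (x0 + s *: e) - v (x0 + s *: e).
set k := fun s : R => 'D_e u (x0 + s *: e) - 'D_e v (x0 + s *: e).
have K1 : 0 < `|e| + 1 by rewrite ltr_wpDl.
set m := Num.min d1 del.
have m0 : 0 < m by rewrite lt_min d10 del0.
have dm : forall t : R, `|t| < m / (`|e| + 1) -> `|x0 - (x0 + t *: e)| < m.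
  move=> t; rewrite ltr_pdivlMr // dist_line_abs => ht.
  by apply: le_lt_trans ht; apply: ler_wpM2l => //; rewrite lerDl.
have hder : forall t : R, `|t| < m / (`|e| + 1) -> is_derive t (1:R) h (k t).
  move=> t /dm; rewrite lt_min => /andP[a _].
  have [du' dv'] := hd1 _ a.
  exact: (is_deriveB (line_is_derive du') (line_is_derive dv')).
have hpos : forall t : R, `|t| < m / (`|e| + 1) -> 0 <= h t.
  move=> t /dm; rewrite lt_min => /andP[_ b].
  by rewrite /h subr_ge0; apply: vu.
have h0 : h 0 = 0 by rewrite /h scale0r addr0 uv0 subrr.
have cq : (fun t : R => t^-1 *: (k t - k 0)) @ 0^' --> K.
  have -> : (fun t : R => t^-1 *: (k t - k 0)) =
      (fun t : R => t^-1 *: (('D_e u \o shift x0) (t *: e) - 'D_e u x0)) -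
      (fun t : R => t^-1 *: (('D_e v \o shift x0) (t *: e) - 'D_e v x0)).
    apply: funext => t; rewrite /k /= scale0r addr0.
    rewrite -[(_ - _) t]/(_ - _) -scalerBr; congr (_ *: _).
    rewrite ![_ *: e + x0]addrC; ring.
  exact: cvgB du dv.
have K2 : 0 < - K / 2 by clear -K0; lra.
move/cvgrPdist_lt: cq => /(_ _ K2) /nbhs_ballP [d2 d20 hd2].
have q : forall t : R, 0 < `|t| < d2 -> t^-1 * (k t - k 0) < K / 2.
  move=> t /andP[t0 td]; have := hd2 t.
  rewrite -ball_normE /ball_ /= sub0r normrN => /(_ td).
  rewrite normr_gt0 in t0 => /(_ t0); rewrite ltr_norml => /andP[a b].
  have : t^-1 *: (k t - k 0) = t^-1 * (k t - k 0) by [].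
  clear -a b; lra.
have b0 : 0 < m / (`|e| + 1) by apply: divr_gt0.
set b := Num.min (m / (`|e| + 1)) d2.
have bb0 : 0 < b by rewrite lt_min b0 d20.
have bm : b <= m / (`|e| + 1) by rewrite ge_min lexx.
have bd : b <= d2 by rewrite ge_min lexx orbT.
set t1 := b / 2.
have t10 : 0 < t1 by rewrite /t1; clear -bb0; lra.
have hd' : forall t : R, - t1 <= t <= t1 -> is_derive t (1:R) h (k t).
  move=> t /andP[a c]; apply: hder.
  have : `|t| <= t1 by rewrite ler_norml a c.
  rewrite /t1 => tt; clear -tt bm bb0; lra.
have ht : forall t : R, - t1 <= t <= t1 -> 0 <= h t.
  move=> t /andP[a c]; apply: hpos.
  have : `|t| <= t1 by rewrite ler_norml a c.
  rewrite /t1 => tt; clear -tt bm bb0; lra.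
have qc : forall c : R, 0 < `|c| <= t1 -> c^-1 * (k c - k 0) < 0.
  move=> c /andP[c0 ct]; have := q c; rewrite c0 /= => /(_ _).
  have : `|c| < d2 by rewrite /t1 in ct; clear -ct bd bb0; lra.
  by move=> -> /(_ isT) hq; clear -hq K0; lra.
case: (leP (k 0) 0) => k0.
- have [c /andP[c0 ct] E] : exists2 c, 0 < c < t1 & h t1 - h 0 = k c * (t1 - 0).
    apply: mvt1 => // t /andP[a c]; apply: hd'; rewrite c andbT.
    by clear -a t10; lra.
  have := qc c; rewrite gtr0_norm // c0 /= => /(_ (ltW ct)) hq.
  have ee : k c - k 0 = c * (c^-1 * (k c - k 0)) by rewrite mulrA mulfV ?mul1r // gt_eqF.
  have hkc : k c < 0 by clear -ee hq c0 k0; nra.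
  have := ht t1; rewrite lexx andbT => /(_ _) ht1.
  have ht1' : 0 <= h t1 by apply: ht1; clear -t10; lra.
  rewrite h0 subr0 subr0 in E.
  by clear -E hkc t10 ht1'; nra.
- have [c /andP[c0 ct] E] : exists2 c, - t1 < c < 0 & h 0 - h (- t1) = k c * (0 - - t1).
    apply: mvt1; first by clear -t10; lra.
    move=> t /andP[a c]; apply: hd'; rewrite a /=.
    by clear -c t10; lra.
  have := qc c; rewrite ltr0_norm // => /(_ _) hq.
  have hq' : c^-1 * (k c - k 0) < 0 by apply: hq; clear -c0 ct; apply/andP; split; lra.
  have ee : k c - k 0 = c * (c^-1 * (k c - k 0)) by rewrite mulrA mulfV ?mul1r // lt_eqF.
  have hkc : 0 < k c by clear -ee hq' ct k0; nra.
  have ht1' : 0 <= h (- t1) by apply: ht; clear -t10; lra.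
  rewrite h0 sub0r opprK in E.
  by clear -E hkc t10 ht1'; nra.
Qed.

End H.


Section I.
Context {R : realType} {n : nat}.
Local Notation V := 'rV[R]_n.

Lemma ray_le_ph (F1 F2 : V -> R) (A1 A2 : set V) (G1 G2 : V -> V) (x0 v : V) :
  C1_closure F1 A1 G1 -> C1_closure F2 A2 G2 -> F1 x0 = 0 -> F2 x0 = 0 ->
  ray_in A1 x0 v -> (forall y, A1 y -> A2 y) -> (forall y, A1 y -> F1 y <= F2 y) ->
  dotv (G1 x0) v <= dotv (G2 x0) v.
Proof.
move=> C1 C2 F10 F20 r12 A12 F12.
apply: (ray_le C1 C2 F10 F20 r12 (ray_sub A12 r12)).
case: r12 => d d0 hd; exists d => // t tt; apply: F12; exact: hd.
Qed.

Lemma phase_near (O : set V) (w : V -> R) (x : V) : open O ->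
  {within closure O, continuous w} -> O x -> w x != 0 ->
  \forall y \near x, (if 0 < w x then posph O w else negph O w) y.
Proof.
move=> oO wc Ox wx.
have cw : {for x, continuous w} := within_cont_at wc (open_interior_closure oO Ox).
have aw : 0 < `|w x| by rewrite normr_gt0.
have [d1 d10 h1] := cont_eps cw aw.
have [d2 d20 h2] := open_eps oO Ox.
apply/nbhs_ballP; exists (Num.min d1 d2); first by rewrite /= lt_min d10 d20.
move=> y; rewrite -ball_normE /ball_ /= lt_min => /andP[a b].
have := h1 y a; have Oy := h2 y b.
case: ifP => wp.
  rewrite (gtr0_norm wp) ltr_norml => /andP[_ h]; split => //=.
  by clear -h wp; lra.
have wn : w x < 0 by rewrite lt_neqAle wx /= leNgt wp.
rewrite (ltr0_norm wn) ltr_norml => /andP[h _]; split => //=.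
by clear -h wn; lra.
Qed.

Lemma C2_derivs (w : V -> R) (A : set V) (x : V) : C2_on w A ->
  (\forall y \near x, A y) ->
  (forall i, \forall y \near x, derivable w y (evec i)) /\
  (forall i, derivable ('D_(evec i) w) x (evec i)).
Proof.
move=> [C1 C2] nA; have Ax : A x := nbhs_singleton nA.
split => i.
  by apply: filterS nA => y Ay; apply: diff_derivable; exact: (C1 y Ay).1.
by apply: diff_derivable; exact: (C2 i x Ax).1.
Qed.

Lemma lap_compare (O : set V) (u v : V -> R) (x : V) : open O -> O x ->
  (forall y, closure O y -> v y <= u y) -> u x = v x ->
  (forall i, \forall y \near x, derivable u y (evec i)) ->
  (forall i, derivable ('D_(evec i) u) x (evec i)) ->
  (forall i, \forall y \near x, derivable v y (evec i)) ->
  (forall i, derivable ('D_(evec i) v) x (evec i)) ->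
  lap v x <= lap u x.
Proof.
move=> oO Ox vu uv nu du nv dv.
have [d d0 hd] := open_eps oO Ox.
rewrite /lap; apply: ler_sum => i _.
apply: (second_deriv_test d0 _ uv (nu i) (nv i) (du i) (dv i)).
by move=> y /hd Oy; apply: vu; apply: subset_closure.
Qed.

End I.

Unset Implicit Arguments.

Theorem lemma7p7 (R : realType) (n : nat) (O : set 'rV[R]_n)
    (g : 'rV[R]_n -> R) :
  open O -> (forall x, 0 < g x) ->
  (forall w z : 'rV[R]_n -> R,
     is_solution g O w -> is_strict_subsolution g O z ->
     {within closure O, continuous w} -> {within closure O, continuous z} ->
     (forall x, closure O x -> z x <= w x) ->
     forall x, O x -> z x < w x) /\
  (forall w z : 'rV[R]_n -> R,
     is_solution g O w -> is_strict_supersolution g O z ->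
     {within closure O, continuous w} -> {within closure O, continuous z} ->
     (forall x, closure O x -> w x <= z x) ->
     forall x, O x -> w x < z x).
Proof.
move=> oO gpos; split.
- move=> w z [wc [C2p [C2n [lapw [Gpw [Gmw [Cpw [Cmw fbw]]]]]]]]
    [zc [_ [lapz [Gpz [Gmz [Cpz [Cmz fbz]]]]]]] _ _ zw x Ox.
  have zwx : z x <= w x by apply: zw; apply: subset_closure.
  rewrite lt_neqAle zwx andbT; apply/eqP => ezw.
  case: (eqVneq (z x) 0) => zx0.
  + have wx0 : w x = 0 by rewrite -ezw.
    have [nuw [nw cw]] := fbw x Ox wx0.
    have [nuz [nz cz]] := fbz x Ox zx0.
    have [nuw1 [aw [bw [[aw0 bw0 nPw nNw fPw] [rPw rNw fMw]]]]] := summary oO wc Cpw Cmw Ox wx0 nw.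
    have [nuz1 [az [bz [[az0 bz0 nPz nNz fPz] [rPz rNz fMz]]]]] := summary oO zc Cpz Cmz Ox zx0 nz.
    rewrite nPw nNw opprK in cw; rewrite nPz nNz in cz.
    have gx := gpos x.
    have rz : ray_in (posph O z) x nuz by apply: rPz; rewrite nuz1.
    have le1 : dotv (Gpz x) nuz <= dotv (Gpw x) nuz.
      apply: (ray_le_ph Cpz Cpw (fpos0 zx0) (fpos0 wx0) rz).
        move=> y [Oy zy]; split => //=; exact: lt_le_trans zy (zw y (subset_closure Oy)).
      move=> y [Oy zy]; rewrite /= in zy.
      have wy : 0 < w y := lt_le_trans zy (zw y (subset_closure Oy)).
      by rewrite (fposE zy) (fposE wy); apply: zw; apply: subset_closure.
    rewrite fPz fPw nuz1 mulr1 (dotvC nuw) in le1.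
    set p := dotv nuz nuw in le1.
    have pl1 : p <= 1 := dotv_unit_le1 nuz1 nuw1.
    have azp : 0 < az.
      rewrite lt_def az0 andbT; apply/eqP => az00; rewrite az00 mulr0 add0r in cz.
      by clear -cz bz0; lra.
    have awp : 0 < aw.
      rewrite lt_def aw0 andbT; apply/eqP => aw00; rewrite aw00 mul0r in le1.
      by clear -le1 azp; lra.
    have pp : 0 < p.
      by have := lt_le_trans azp le1; rewrite pmulr_rgt0.
    have rn := rNw (or_introl awp).
    have sub : forall y, negph O w y -> negph O z y.
      move=> y [Oy wy]; split => //=; exact: le_lt_trans (zw y (subset_closure Oy)) wy.
    have le2 : dotv (Gmw x) (- nuw) <= dotv (Gmz x) (- nuw).
      apply: (ray_le_ph Cmw Cmz (fneg0 wx0) (fneg0 zx0) rn sub).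
      move=> y [Oy wy]; rewrite /= in wy.
      have zy : z y < 0 := le_lt_trans (zw y (subset_closure Oy)) wy.
      by rewrite (fnegE wy) (fnegE zy) lerN2; apply: zw; apply: subset_closure.
    rewrite (fMw _ rn) (fMz _ (ray_sub sub rn)) !dotvNr nuw1 -/p in le2.
    have h1 : bz * p <= bz by rewrite ler_piMr.
    have h2 : g x * az <= g x * (aw * p) by rewrite ler_pM2l.
    have h3 : g x * (aw * p) <= g x * aw.
      by rewrite ler_pM2l // ler_piMr // ltW.
    by clear -cw cz le2 h1 h2 h3; nra.
  + have wx : w x != 0 by rewrite -ezw.
    have [hlz lz] := lapz x Ox zx0.
    have lw := lapw x Ox wx.
    have nA := phase_near oO wc Ox wx.
    have [nuw duw] : (forall i, \forall y \near x, derivable w y (evec i)) /\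
        (forall i, derivable ('D_(evec i) w) x (evec i)).
      by case: ifP nA => _ nA; [exact: C2_derivs C2p nA | exact: C2_derivs C2n nA].
    have := lap_compare oO Ox zw (esym ezw) nuw duw (fun i => (hlz i).1) (fun i => (hlz i).2).
    by rewrite lw; clear -lz; lra.
- move=> w z [wc [C2p [C2n [lapw [Gpw [Gmw [Cpw [Cmw fbw]]]]]]]]
    [zc [_ [lapz [Gpz [Gmz [Cpz [Cmz fbz]]]]]]] _ _ wz x Ox.
  have wzx : w x <= z x by apply: wz; apply: subset_closure.
  rewrite lt_neqAle wzx andbT; apply/eqP => ewz.
  case: (eqVneq (z x) 0) => zx0.
  + have wx0 : w x = 0 by rewrite ewz.
    have [nuw [nw cw]] := fbw x Ox wx0.
    have [nuz [nz cz]] := fbz x Ox zx0.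
    have [nuw1 [aw [bw [[aw0 bw0 nPw nNw fPw] [rPw rNw fMw]]]]] := summary oO wc Cpw Cmw Ox wx0 nw.
    have [nuz1 [az [bz [[az0 bz0 nPz nNz fPz] [rPz rNz fMz]]]]] := summary oO zc Cpz Cmz Ox zx0 nz.
    rewrite nPw nNw opprK in cw; rewrite nPz nNz in cz.
    have gx := gpos x.
    have bzp : 0 < bz.
      have : 0 <= g x * az by apply: mulr_ge0 => //; exact: ltW.
      by clear -cz; lra.
    have rn := rNz (or_intror bzp).
    have sub : forall y, negph O z y -> negph O w y.
      move=> y [Oy zy]; split => //=; exact: le_lt_trans (wz y (subset_closure Oy)) zy.
    have le2 : dotv (Gmz x) (- nuz) <= dotv (Gmw x) (- nuz).
      apply: (ray_le_ph Cmz Cmw (fneg0 zx0) (fneg0 wx0) rn sub).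
      move=> y [Oy zy]; rewrite /= in zy.
      have wy : w y < 0 := le_lt_trans (wz y (subset_closure Oy)) zy.
      by rewrite (fnegE wy) (fnegE zy) lerN2; apply: wz; apply: subset_closure.
    set p := dotv nuw nuz.
    rewrite (fMz _ rn) (fMw _ (ray_sub sub rn)) !dotvNr nuz1 -/p in le2.
    have pl1 : p <= 1 := dotv_unit_le1 nuw1 nuz1.
    have bwp : 0 < bw * p by clear -le2 bzp; lra.
    have bwp' : 0 < bw.
      rewrite lt_def bw0 andbT; apply/eqP => b0; rewrite b0 mul0r in bwp.
      by rewrite ltxx in bwp.
    have pp : 0 < p by move: bwp; rewrite pmulr_rgt0.
    have rp : ray_in (posph O w) x nuw by apply: rPw; rewrite nuw1.
    have sub2 : forall y, posph O w y -> posph O z y.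
      move=> y [Oy wy]; split => //=; exact: lt_le_trans wy (wz y (subset_closure Oy)).
    have le1 : dotv (Gpw x) nuw <= dotv (Gpz x) nuw.
      apply: (ray_le_ph Cpw Cpz (fpos0 wx0) (fpos0 zx0) rp sub2).
      move=> y [Oy wy]; rewrite /= in wy.
      have zy : 0 < z y := lt_le_trans wy (wz y (subset_closure Oy)).
      by rewrite (fposE wy) (fposE zy); apply: wz; apply: subset_closure.
    rewrite fPw fPz nuw1 mulr1 (dotvC nuz) -/p in le1.
    have h1 : bw * p <= bw by rewrite ler_piMr // ltW.
    have h2 : g x * aw <= g x * (az * p) by rewrite ler_pM2l.
    have h3 : g x * (az * p) <= g x * az.
      by rewrite ler_pM2l // ler_piMr // ltW.
    by clear -cw cz le2 h1 h2 h3; nra.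
  + have wx : w x != 0 by rewrite ewz.
    have [hlz lz] := lapz x Ox zx0.
    have lw := lapw x Ox wx.
    have nA := phase_near oO wc Ox wx.
    have [nuw duw] : (forall i, \forall y \near x, derivable w y (evec i)) /\
        (forall i, derivable ('D_(evec i) w) x (evec i)).
      by case: ifP nA => _ nA; [exact: C2_derivs C2p nA | exact: C2_derivs C2n nA].
    have := lap_compare oO Ox wz (esym ewz) (fun i => (hlz i).1) (fun i => (hlz i).2) nuw duw.
    by rewrite lw; clear -lz; lra.
Qed.
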